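(* Let $G$ be a biconnected series-parallel graph without transitive edges, let $(s,t)$ be a separation pair of $G$ and $G'$ a component of $G$ with respect to $(s,t)$. Then $G'$ is heavy if and only if a longest $s$–$t$ path in $G'$ has length (number of edges) at least four.
   Context: A biconnected graph is series-parallel if it contains no subdivision of $K_4$. A separation pair of a biconnected graph $G$ is a pair $(s,t)$ of vertices with $G-s-t$ disconnected; a transitive edge is an edge joining the two vertices of a separation pair. A component w.r.t. $(s,t)$ is the subgraph induced by $s$, $t$ and the vertex set of one connected component of $G-s-t$; vertices other than $s,t$ are internal. A component is heavy if it has an internal vertex adjacent to neither $s$ nor $t$, and light otherwise. *)

(* Defs.v *)
From mathcomp Require Import all_boot.
Set Implicit Arguments. Unset Strict Implicit. Unset Printing Implicit Defensive.

Section Graphs.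
Variable T : finType.
Variable e : rel T.

Definition simple_graph := symmetric e /\ irreflexive e.

Definition connected_in (S : {set T}) (x y : T) : Prop :=
  exists p : seq T, [/\ path e x p, last x p = y & all (mem S) (x :: p)].

Definition connected_set (S : {set T}) : Prop :=
  forall x y, x \in S -> y \in S -> connected_in S x y.

Definition biconnected : Prop :=
  [/\ 3 <= #|T|, connected_set setT & forall v, connected_set [set~ v]].

Definition has_K4_subdivision : Prop :=
  exists (f : 'I_4 -> T) (q : 'I_4 -> 'I_4 -> seq T),
    [/\ injective f,
        forall i j : 'I_4, i < j ->
          path e (f i) (rcons (q i j) (f j)) /\ uniq (q i j),
        forall i j : 'I_4, i < j -> forall x, x \in q i j -> forall k, x != f k
      & forall i j i' j' : 'I_4, i < j -> i' < j' -> (i, j) != (i', j') ->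
          forall x, x \in q i j -> x \notin q i' j'].

Definition series_parallel : Prop := biconnected /\ ~ has_K4_subdivision.

Definition minus2 (s t : T) : {set T} := [set: T] :\ s :\ t.

Definition separation_pair (s t : T) : Prop :=
  s != t /\ ~ connected_set (minus2 s t).

Definition transitive_edge (u v : T) : Prop := e u v /\ separation_pair u v.

Definition no_transitive_edges : Prop := forall u v, ~ transitive_edge u v.

(* C is the vertex set of a connected component of G - s - t:
   nonempty, connected, and closed under adjacency inside G - s - t *)
Definition conn_comp (s t : T) (C : {set T}) : Prop :=
  [/\ C != set0, C \subset minus2 s t, connected_set C
    & forall u v, u \in C -> v \in minus2 s t -> e u v -> v \in C].

(* vertex set of the component G' (induced subgraph on C + s + t) *)
Definition comp_vertices (s t : T) (C : {set T}) : {set T} := C :|: [set s; t].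

(* internal vertices of the component are those of C *)
Definition heavy (s t : T) (C : {set T}) : Prop :=
  exists2 v, v \in C & ~~ e v s && ~~ e v t.

(* p is a (simple) s-t path in the induced subgraph on V with size p edges *)
Definition st_path (V : {set T}) (s t : T) (p : seq T) : Prop :=
  [/\ path e s p, last s p = t, uniq (s :: p) & all (mem V) (s :: p)].

Definition longest_st_path_ge (s t : T) (C : {set T}) (k : nat) : Prop :=
  exists p, st_path (comp_vertices s t C) s t p /\ k <= size p.

End Graphs.

(* Main.v *)
Require Import Defs.
From mathcomp Require Import all_boot.
From mathcomp Require Import zify.
From Stdlib Require Import Classical.
Set Implicit Arguments. Unset Strict Implicit. Unset Printing Implicit Defensive.

Section Aux.
Variable T : finType.
Variable e : rel T.
Hypothesis esym : symmetric e.

Lemma split_first (a : pred T) l : has a l ->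
  exists l1 x l2, [/\ l = l1 ++ x :: l2, a x & ~~ has a l1].
Proof.
elim: l => //= y l IH; case: (boolP (a y)) => ay /=.
  by move=> _; exists [::], y, l.
move=> /IH [l1 [x [l2 [-> ax hl1]]]]; exists (y :: l1), x, l2; split => //=.
by rewrite negb_or ay.
Qed.

Lemma hit (S : {set T}) (A : pred T) x y : connected_in e S x y -> A y -> ~~ A x ->
  exists l z, [/\ path e x (rcons l z), uniq (x :: rcons l z), A z, ~~ has A l
               & all (mem S) (x :: rcons l z)].
Proof.
case=> p [pp lp ap] Ay nAx.
case: (shortenP pp) lp => p' pp' up' sub lp'.
have hA : has A p'.
  have : y \in x :: p' by rewrite -lp' mem_last.
  rewrite inE => /orP [/eqP yx|yp]; first by rewrite -yx Ay in nAx.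
  by apply/hasP; exists y.
have [l1 [z [l2 [E Az nh]]]] := split_first hA.
exists l1, z; split => //.
- by move: pp'; rewrite E cat_path rcons_path => /andP[-> /=] /andP[-> _].
- by move: up'; rewrite E -cat_rcons -cat_cons cat_uniq => /andP[].
- move: ap => /= /andP[-> /allP ap]; apply/allP => u; rewrite -cats1 mem_cat => hu.
  apply: ap; apply: sub; rewrite E mem_cat; move: hu; rewrite mem_seq1 inE.
  by case/orP => [->//|/eqP->]; rewrite eqxx orbT.
Qed.


Lemma stay_in (M C : {set T}) x l :
  (forall u v, u \in C -> v \in M -> e u v -> v \in C) ->
  x \in C -> path e x l -> all (mem M) l -> all (mem C) l.
Proof.
move=> cl; elim: l x => //= y l IH x xC /andP[exy pl] /andP[yM aM].
have yC : y \in C by apply: cl exy.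
by rewrite yC (IH y).
Qed.

Lemma stay_out (M C : {set T}) x l :
  (forall u v, u \in C -> v \in M -> e u v -> v \in C) ->
  x \in M -> x \notin C -> path e x l -> all (mem M) l -> all [pred u | u \notin C] l.
Proof.
move=> cl; elim: l x => //= y l IH x xM xC /andP[exy pl] /andP[yM aM].
have yC : y \notin C.
  by apply/negP => yC; move: xC; rewrite (cl y x yC) // esym.
by rewrite yC (IH y).
Qed.

Lemma st_rev (V : {set T}) x y p : st_path e V x y p ->
  st_path e V y x (rev (belast x p)).
Proof.
rewrite /st_path => -[pp lp up ap]; case/lastP: p pp lp up ap => [|p z] /=.
  by move=> _ -> _ /andP[-> _].
move=> pp; rewrite last_rcons => lz; subst z => up ap.
have hp := rev_path e x (rcons p y).
rewrite last_rcons (@eq_path _ _ e) in hp; last by move=> a b; rewrite esym.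
rewrite hp pp; split => //.
- by rewrite belast_rcons rev_cons last_rcons.
- rewrite belast_rcons mem_rev rev_uniq.
  move: up; rewrite mem_rcons rcons_uniq !inE negb_or => /andP[/andP[xy xp] /andP[yp up]].
  by rewrite /= eq_sym (negbTE xy) (negbTE yp) xp up.
- move: ap; rewrite belast_rcons all_rev all_rcons /= => /andP[xV /andP[-> ->]].
  by rewrite xV.
Qed.

Lemma len4 (V : {set T}) s t p v : st_path e V s t p -> v \in p -> v != t ->
  ~~ e v s -> ~~ e v t -> 4 <= size p.
Proof.
rewrite /st_path => -[pp lp _ _] vp vt nvs nvt.
case/splitPr: vp pp lp => a b; rewrite cat_path last_cat /= => /andP[_ /andP[elv pb]] lb.
case: a elv => [|a1 a] /= elv.
  by rewrite esym elv in nvs.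
case: b pb lb => [|b1 [|b2 b]] /=.
- by move=> _ vt'; rewrite vt' eqxx in vt.
- by move=> /andP[evb _] bt; rewrite -bt evb in nvt.
- by move=> _ _; rewrite size_cat /= !addnS.
Qed.

Lemma ext_after (V : {set T}) x y q1 w q2 v l z :
  st_path e V x y (q1 ++ w :: q2) -> z \in q2 -> e w v -> path e v (rcons l z) ->
  uniq (v :: l) -> ~~ has (mem (x :: q1 ++ w :: q2)) (v :: l) ->
  all (mem V) (v :: l) -> exists p, st_path e V x y p /\ v \in p.
Proof.
rewrite /st_path => -[pp lp up ap] zq; case/splitPr: zq pp lp up ap => q21 q22.
move=> pp lp up ap ewv pvl uvl hvl avl.
have E : x :: q1 ++ w :: q21 ++ z :: q22 = (x :: q1 ++ [:: w]) ++ q21 ++ z :: q22.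
  by rewrite /= -catA.
exists (q1 ++ w :: v :: l ++ z :: q22).
have E2 : x :: q1 ++ w :: v :: l ++ z :: q22 = (x :: q1 ++ [:: w]) ++ (v :: l) ++ z :: q22.
  by rewrite /= -!catA.
split; last by rewrite mem_cat !inE eqxx !orbT.
split.
- move: pp; rewrite -!cat_rcons !cat_path last_rcons /=.
  move=> /and3P[p1 _]; rewrite !last_rcons => p3.
  by rewrite rcons_path last_rcons p1 ewv pvl p3.
- by rewrite -lp !last_cat /= !last_cat.
- rewrite E2 uniq_catCA cat_uniq uvl.
  have U0 : uniq ((x :: q1 ++ [:: w]) ++ z :: q22).
    apply: subseq_uniq up; rewrite E; apply: cat_subseq => //.
    exact: suffix_subseq.
  rewrite U0 andbT has_sym; apply: contra hvl; apply: sub_has => u /=.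
  rewrite !(mem_cat, inE).
  by case: (u == x); case: (u \in q1); case: (u==w); case: (u==z); case: (u \in q22); rewrite ?orbT.
- move: ap avl; rewrite E E2 !all_cat => /and3P[-> _ ->] ->.
  done.
Qed.

Lemma mem_belast_neq (x v : T) p : v \in p -> v != last x p -> v \in belast x p.
Proof.
case/lastP: p => [|p u] //; rewrite mem_rcons last_rcons belast_rcons inE.
by case/orP => [/eqP->|vp _]; rewrite ?eqxx // inE vp orbT.
Qed.

Lemma rev_split (x : T) q1 (w : T) q2 (u : T) :
  rev (belast x (q1 ++ w :: rcons q2 u)) = rev q2 ++ w :: rev (x :: q1).
Proof.
by rewrite -rcons_cons -rcons_cat belast_rcons -cat_cons rev_cat rev_cons cat_rcons.
Qed.

End Aux.

Section K4.
Variable T : finType.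
Variable e : rel T.

Lemma mem_flatten_nth (B : seq (seq T)) i x : x \in nth [::] B i -> x \in flatten B.
Proof.
elim: B i => [|b B IH] [|i] //=; rewrite ?nth_nil // mem_cat => h.
  by rewrite h.
by rewrite (IH i h) orbT.
Qed.

Lemma uniq_flatten_nth (B : seq (seq T)) i : uniq (flatten B) -> uniq (nth [::] B i).
Proof.
elim: B i => [|b B IH] [|i] //=; rewrite cat_uniq => /and3P[ub _ uB] //.
exact: IH.
Qed.

Lemma flatten_disj (B : seq (seq T)) i j x : uniq (flatten B) -> i != j ->
  x \in nth [::] B i -> x \in nth [::] B j -> False.
Proof.
elim: B i j => [|b B IH] i j; first by rewrite !nth_nil.
rewrite /= cat_uniq => /and3P[ub hb uB].
case: i => [|i]; case: j => [|j] //= ij.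
- move=> xb /mem_flatten_nth xB; move/hasPn: hb => /(_ x xB); by rewrite xb.
- move=> /mem_flatten_nth xB xb; move/hasPn: hb => /(_ x xB); by rewrite xb.
- exact: IH.
Qed.

Definition idx (i j : nat) : nat :=
  match i, j with
  | 0, 1 => 4 | 0, 2 => 5 | 0, 3 => 6 | 1, 2 => 7 | 1, 3 => 8 | 2, 3 => 9
  | _, _ => 10 end.

Lemma idx_ge4 i j : i < j -> j < 4 -> 4 <= idx i j.
Proof. by do 4?[case: i => [|i]] => //; do 4?[case: j => [|j]]. Qed.

Lemma idx_inj i j i' j' : i < j -> j < 4 -> i' < j' -> j' < 4 ->
  idx i j = idx i' j' -> (i == i') && (j == j').
Proof.
by do 4?[case: i => [|i]] => //; do 4?[case: j => [|j]] => //;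
   do 4?[case: i' => [|i']] => //; do 4?[case: j' => [|j']].
Qed.

Lemma K4_of (a b c d : T) (q01 q02 q03 q12 q13 q23 : seq T) :
  uniq (flatten [:: [:: a]; [:: b]; [:: c]; [:: d]; q01; q02; q03; q12; q13; q23]) ->
  path e a (rcons q01 b) -> path e a (rcons q02 c) -> path e a (rcons q03 d) ->
  path e b (rcons q12 c) -> path e b (rcons q13 d) -> path e c (rcons q23 d) ->
  has_K4_subdivision e.
Proof.
set B := [:: [:: a]; [:: b]; [:: c]; [:: d]; q01; q02; q03; q12; q13; q23].
move=> U p01 p02 p03 p12 p13 p23.
pose f := fun i : 'I_4 => nth a [:: a; b; c; d] i.
pose q := fun i j : 'I_4 => nth [::] B (idx i j).
have fB : forall k : 'I_4, f k \in nth [::] B k.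
  by case=> [[|[|[|[|k]]]] Hk] //=; rewrite mem_seq1.
have PP : forall m n, m < n -> n < 4 ->
    path e (nth a [:: a; b; c; d] m) (rcons (nth [::] B (idx m n)) (nth a [:: a; b; c; d] n)).
  move=> m n mn n4; have m4 : m < 4 by exact: ltn_trans mn n4.
  move: m4 n4 mn.
  by do 4?[case: m => [|m] //]; do 4?[case: n => [|n] //].
exists f, q; split.
- move=> i j fij; apply/val_inj/eqP; apply/negPn/negP => ij.
  apply: (flatten_disj U ij (fB i)); rewrite fij; exact: fB.
- move=> i j ij; split; last exact: uniq_flatten_nth.
  exact: PP.
- move=> i j ij x xq k; apply/negP => /eqP xk.
  have ik : idx i j != k.
    by apply/negP => /eqP h; have := idx_ge4 ij (ltn_ord j); rewrite h leqNgt ltn_ord.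
  apply: (flatten_disj U ik xq); rewrite xk; exact: fB.
- move=> i j i' j' ij ij' ne x xq; apply/negP => xq'.
  have ii : idx i j != idx i' j'.
    apply/negP => /eqP h; have /andP[h1 h2] := idx_inj ij (ltn_ord j) ij' (ltn_ord j') h.
    by move/eqP/val_inj: h1 ne => ->; move/eqP/val_inj: h2 => ->; rewrite eqxx.
  exact: (flatten_disj U ii xq xq').
Qed.


Lemma arith9 c1 c2 c3 c4 c5 n1 n2 n3 n4 :
  n1 + n2 + c1 + n3 + c2 + c3 + n4 + c4 + c5 = n1 + n3 + n2 + n4 + c1 + 0 + c4 + c2 + c5 + c3.
Proof. lia. Qed.

Lemma arithA S P1 P2 A X Tt O :
  S + (P1 + (P2 + (A + (X + (Tt + 0) + O)))) = S + (P2 + (P1 + (A + (X + (Tt + O))))).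
Proof. lia. Qed.

Lemma arithB S P1 P2 A X Tt O :
  S + (P1 + (P2 + (A + (X + (Tt + 0) + O)))) = P2 + (Tt + (A + (X + (O + (S + (P1 + 0)))))).
Proof. lia. Qed.

Lemma path_split x s1 z s2 : path e x (s1 ++ z :: s2) -> path e x (rcons s1 z) /\ path e z s2.
Proof. by rewrite -cat_rcons cat_path last_rcons => /andP[]. Qed.

Lemma path_revr (esym : symmetric e) a s b : path e a (rcons s b) -> path e b (rcons (rev s) a).
Proof.
have h := rev_path e a (rcons s b).
rewrite last_rcons belast_rcons rev_cons in h.
rewrite h (@eq_path _ _ e) // => u v; exact: esym.
Qed.

Lemma chord (esym : symmetric e) x y al be : e x y -> path e x (rcons al y) ->
  path e y (rcons be x) -> uniq (x :: y :: al ++ be) -> al != [::] -> be != [::] ->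
  connected_set e (minus2 x y) -> has_K4_subdivision e.
Proof.
move=> exy pa pb U nal nbe cn.
have [z0 z0al] : exists z0, z0 \in al by case: al nal {pa U} => // a l _; exists a; rewrite mem_head.
have [w0 w0be] : exists w0, w0 \in be by case: be nbe {pb U} => // a l _; exists a; rewrite mem_head.
have U' := U.
move: U'; rewrite /= !inE !mem_cat !negb_or cat_uniq => /andP[/and3P[xy xal xbe] /and4P[/andP[yal ybe] ual dab ube]].
have dj : forall u, u \in al -> u \in be -> False.
  by move=> u ua ub; move/hasPn: dab => /(_ u ub); rewrite ua.
have m2 : forall u, u \in al -> u \in minus2 x y.
  move=> u ua; rewrite /minus2 !in_setD1 in_setT andbT.
  by apply/andP; split; apply/negP => /eqP eu; subst u; [rewrite ua in yal | rewrite ua in xal].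
have m2b : forall u, u \in be -> u \in minus2 x y.
  move=> u ub; rewrite /minus2 !in_setD1 in_setT andbT.
  by apply/andP; split; apply/negP => /eqP eu; subst u; [rewrite ub in ybe | rewrite ub in xbe].
case: (cn z0 w0 (m2 _ z0al) (m2b _ w0be)) => W [pW lW aW].
case: (shortenP pW) lW => W' pW' uW' sW lW'.
have aW' : forall u, u \in z0 :: W' -> u \in minus2 x y.
  move=> u; rewrite inE => /orP[/eqP->|/sW uW]; first exact: m2.
  by move/allP: aW => /(_ u); rewrite inE uW orbT => /(_ isT).
have hbe : has (mem be) (z0 :: W').
  by apply/hasP; exists w0 => //; rewrite -lW' mem_last.
have [L1 [w [L2 [E1 wbe nL1]]]] := split_first hbe.
have hal : has (mem al) (rev L1).
  case: L1 E1 nL1 => [|l1 L1] /= E1 nL1.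
    by case: E1 => ez _; subst z0; case: (dj _ z0al wbe).
  by case: E1 => ez _; subst l1; apply/hasP; exists z0; rewrite // mem_rev mem_head.
have [R1 [z [R2 [E2 zal nR1]]]] := split_first hal.
have E3 : L1 = rev R2 ++ z :: rev R1 by rewrite -(revK L1) E2 rev_cat rev_cons cat_rcons.
set Q := rev R1.
have E4 : z0 :: W' = rev R2 ++ (z :: rcons Q w) ++ L2.
  by rewrite E1 E3 /Q -catA /= cat_rcons.
have pQ : path e z (rcons Q w).
  have S : sorted e (z0 :: W') by [].
  rewrite E4 in S; have [_ S'] := cat_sorted2 S; have [S'' _] := cat_sorted2 S'; exact S''.
have uQ : uniq Q.
  move: uW'; rewrite E4 !cat_uniq => /and3P[_ _ /and3P[/= /andP[_]]].
  by rewrite rcons_uniq => /andP[].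
have memQ : forall u, u \in Q -> [/\ u \notin al, u \notin be & u \in minus2 x y].
  move=> u uq; split.
  - apply/negP => ua; have := hasPn nR1 u; rewrite -mem_rev => /(_ uq) /negP; apply; exact: ua.
  - apply/negP => ub; have := hasPn nL1 u.
    have -> : u \in L1 by rewrite E3 mem_cat inE uq !orbT.
    by move=> /(_ isT) /negP; apply.
  - by apply: aW'; rewrite E4 !mem_cat inE mem_rcons inE uq !orbT.
case/splitPr: zal pa U ual dab xal yal dj m2 z0al memQ => a1 a2 pa U ual dab xal yal dj m2 z0al memQ.
case/splitPr: wbe pb U ube dab xbe ybe dj m2b w0be memQ => b1 b2 pb U ube dab xbe ybe dj m2b w0be memQ.
move: pa; rewrite rcons_cat rcons_cons => /path_split [p01 p12].
move: pb; rewrite rcons_cat rcons_cons => /path_split [p23 /(path_revr esym) p03].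
apply: (@K4_of x z y w a1 [::] (rev b2) a2 Q b1) => //; last by rewrite /= exy.
have P : perm_eq ((x :: y :: (a1 ++ z :: a2) ++ b1 ++ w :: b2) ++ Q)
  (flatten [:: [:: x]; [:: z]; [:: y]; [:: w]; a1; [::]; rev b2; a2; Q; b1]).
  apply/permP => p; rewrite !count_cat /= !count_cat ?count_rev /=.
  move: (count p a1) (count p a2) (count p b1) (count p b2) (count p R1) (nat_of_bool (p x)) (nat_of_bool (p y)) (nat_of_bool (p z)) (nat_of_bool (p w)) => c1 c2 c3 c4 c5 n1 n2 n3 n4.
  by rewrite !addn0 !addnA; apply: arith9.
rewrite -(perm_uniq P) cat_uniq U uQ andbT.
apply/hasPn => u /memQ [h1 h2 h3].
move: h3; rewrite /minus2 !in_setD1 => /and3P[uy ux _].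
move: h1 h2; rewrite !inE !mem_cat !inE (negbTE ux) (negbTE uy) /=.
by case: (u \in a1); case: (u == z); case: (u \in a2); case: (u \in b1); case: (u == w); case: (u \in b2).
Qed.

End K4.

Section Main.
Variable T : finType.
Variable e : rel T.
Hypothesis esym : symmetric e.
Variables (s t : T) (C : {set T}).
Hypothesis hst : s != t.
Hypothesis bic : forall x, connected_set e [set~ x].
Hypothesis cc : conn_comp e s t C.

Local Notation V := (comp_vertices s t C).

Lemma inC u : u \in C -> (u != s) && (u != t).
Proof.
case: cc => _ sub _ _ uC; have := subsetP sub u uC.
by rewrite /minus2 !in_setD1 => /and3P[-> -> _].
Qed.

Lemma clC u v : u \in C -> v \in minus2 s t -> e u v -> v \in C.
Proof. by case: cc => _ _ _; apply. Qed.

Lemma inV u : u \in C -> u \in V.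
Proof. by rewrite /comp_vertices inE => ->. Qed.

Lemma sV : s \in V. Proof. by rewrite /comp_vertices !inE eqxx orbT. Qed.
Lemma tV : t \in V. Proof. by rewrite /comp_vertices !inE eqxx !orbT. Qed.

Lemma in_minus2 u : u != s -> u != t -> u \in minus2 s t.
Proof. by move=> us ut; rewrite /minus2 !in_setD1 us ut in_setT. Qed.

Lemma allC v m : v \in C -> path e v m -> all (fun u => (u != s) && (u != t)) m ->
  all (mem C) m.
Proof.
move=> vC pm am; apply: (@stay_in _ e (minus2 s t) C v m) => //; first exact: clC.
by apply/allP => u /(allP am) /andP[us ut]; exact: in_minus2.
Qed.

Lemma allCV m : all (mem C) m -> all (mem V) m.
Proof. by move=> /allP h; apply/allP => u /h /inV. Qed.

Lemma notin_allC u m : all (mem C) m -> u \notin C -> u \notin m.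
Proof. by move=> /allP h uC; apply/negP => /h; apply/negP. Qed.

Lemma sC : s \notin C. Proof. by apply/negP => /inC; rewrite eqxx. Qed.
Lemma tC : t \notin C. Proof. by apply/negP => /inC; rewrite eqxx andbF. Qed.

Lemma fan_base v : v \in C -> e v s -> exists p, st_path e V s t p /\ v \in p.
Proof.
move=> vC evs; have /andP[vs vt] := inC vC.
have cn : connected_in e [set~ s] v t.
  by apply: bic; rewrite in_setC1 // eq_sym.
have [m [z [pm um /eqP zt nm am]]] := @hit _ e [set~ s] (pred1 t) v t cn (eqxx t) vt.
subst z.
have mC : all (mem C) m.
  apply: (allC vC); first by move: pm; rewrite rcons_path => /andP[].
  move: am => /= /andP[_]; rewrite all_rcons => /andP[_ /allP am].
  apply/allP => u um'; have us : u \in [set~ s] := am u um'.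
  rewrite -in_setC1 us /=.
  by apply/negP => /eqP ut; move/hasPn: nm => /(_ u um'); rewrite /= ut eqxx.
exists (v :: rcons m t); split; last by rewrite mem_head.
split.
- by rewrite /= esym evs.
- by rewrite /= last_rcons.
- rewrite (cons_uniq s) um andbT inE mem_rcons inE negb_or eq_sym vs negb_or hst /=.
  exact: notin_allC mC sC.
- by rewrite /= sV inV //= all_rcons; apply/andP; split; [exact: tV | exact: allCV].
Qed.

Lemma fan_step v w p : v \in C -> w \in C -> e v w -> st_path e V s t p -> w \in p ->
  exists p', st_path e V s t p' /\ v \in p'.
Proof.
move=> vC wC evw hp wp.
case: (boolP (v \in p)) => vp; first by exists p.
have /andP[vs vt] := inC vC; have /andP[ws wt] := inC wC.
have vw : v != w by apply/negP => /eqP vw; rewrite vw wp in vp.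
have hp' := hp; case: hp' => _ lp _ _.
have cn : connected_in e [set~ w] v t.
  by apply: bic; rewrite in_setC1 // eq_sym.
have At : t \in s :: p by rewrite -lp mem_last.
have nAv : v \notin s :: p by rewrite inE negb_or vs vp.
have [m [z [pm um zA nm am]]] := @hit _ e [set~ w] (mem (s :: p)) v t cn At nAv.
move: am; rewrite /= all_rcons => /and3P[_ zw am].
have zw' : z != w by rewrite -in_setC1.
have mC : all (mem C) m.
  apply: (allC vC); first by move: pm; rewrite rcons_path => /andP[].
  apply/allP => u um'; move/hasPn: nm => /(_ u um') /=.
  rewrite inE negb_or => /andP[-> up] /=.
  have tp : t \in p by move: At; rewrite inE eq_sym (negbTE hst).
  by apply/negP => /eqP ut; rewrite ut tp in up.
have uvm : uniq (v :: m) by move: um; rewrite -rcons_cons rcons_uniq => /andP[].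
have hvm : ~~ has (mem (s :: p)) (v :: m) by rewrite /= negb_or nAv nm.
have avm : all (mem V) (v :: m) by rewrite /= inV // allCV.
have ewv : e w v by rewrite esym.
case/splitPr: wp hp lp zA hvm At nAv vp => q1 q2 hp lp zA hvm At nAv vp.
have : z \in s :: q1 ++ w :: q2 by [].
rewrite !(inE, mem_cat) (negbTE zw') /= orbA -(@in_cons _ s q1 z) => /orP [zb|za].
  clear zA; case/lastP: q2 hp lp hvm At nAv vp => [|q2 u] hp lp hvm At nAv vp.
    by move: lp; rewrite last_cat /= => wt'; rewrite wt' eqxx in wt.
  have hr := st_rev esym hp; rewrite rev_split in hr.
  have lu : u = t by move: lp; rewrite last_cat /= last_rcons.
  subst u.
  have hvm' : ~~ has (mem (t :: rev q2 ++ w :: rev (s :: q1))) (v :: m).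
    apply: contra hvm; apply: sub_has => x /=.
    rewrite !(inE, mem_cat, mem_rev, mem_rcons).
    by case: (x == t); case: (x == s); case: (x \in q1); case: (x == w); case: (x \in q2); rewrite ?orbT.
  have zr : z \in rev (s :: q1) by rewrite mem_rev.
  have [p'' [hp'' vp'']] := ext_after hr zr ewv pm uvm hvm' avm.
  have hr' := st_rev esym hp''.
  exists (rev (belast t p'')); split => //.
  rewrite mem_rev; apply: mem_belast_neq => //.
  by move: hp''; rewrite /st_path => -[_ -> _ _].
exact: ext_after hp za ewv pm uvm hvm avm.
Qed.

Lemma fan n : forall v l, v \in C -> path e v (rcons l s) -> all (mem C) l ->
  size l <= n -> exists p, st_path e V s t p /\ v \in p.
Proof.
elim: n => [|n IH] v [|w l] vC pl al sl //.
- by apply: fan_base => //; move: pl => /= /andP[].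
- by apply: fan_base => //; move: pl => /= /andP[].
- move: pl al => /= /andP[evw pl] /andP[wC al].
  have [p [hp wp]] := IH w l wC pl al sl.
  exact: fan_step evw hp wp.
Qed.

Lemma heavy_long : heavy e s t C -> longest_st_path_ge e s t C 4.
Proof.
case=> v vC /andP[nvs nvt]; have /andP[vs vt] := inC vC.
have cn : connected_in e [set~ t] v s.
  by apply: bic; rewrite in_setC1 // eq_sym.
have [m [z [pm um /eqP zs nm am]]] := @hit _ e [set~ t] (pred1 s) v s cn (eqxx s) vs.
subst z.
have mC : all (mem C) m.
  apply: (allC vC); first by move: pm; rewrite rcons_path => /andP[].
  move: am => /= /andP[_]; rewrite all_rcons => /andP[_ /allP am].
  apply/allP => u um'; have ut : u \in [set~ t] := am u um'.
  rewrite in_setC1 in ut; rewrite ut andbT.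
  by apply/negP => /eqP us; move/hasPn: nm => /(_ u um'); rewrite /= us eqxx.
have [p [hp vp]] := fan vC pm mC (leqnn _).
exists p; split => //.
exact: (len4 esym hp vp vt nvs nvt).
Qed.

Lemma hit_avoid a b u0 : a != b -> u0 \in minus2 s t -> u0 \notin C ->
  a \in [set s; t] -> b \in [set s; t] ->
  exists l, [/\ path e u0 (rcons l b), uniq (u0 :: rcons l b)
     & all [pred u | (u \notin C) && (u \in minus2 s t)] l].
Proof.
move=> ab u0m u0C ast bst.
have [u0a u0b] : u0 != a /\ u0 != b.
  move: u0m ast bst; rewrite /minus2 !in_setD1 !inE => /and3P[u0t u0s _].
  by case/orP => /eqP->; case/orP => /eqP->.
have cn : connected_in e [set~ a] u0 b by apply: bic; rewrite in_setC1 // eq_sym.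
have [m [z [pm um /eqP zb nm am]]] := @hit _ e [set~ a] (pred1 b) u0 b cn (eqxx b) u0b.
subst z; exists m; split => //.
have mm : all (mem (minus2 s t)) m.
  move: am => /= /andP[_]; rewrite all_rcons => /andP[_ /allP am].
  apply/allP => u um'; have ua : u \in [set~ a] := am u um'.
  rewrite in_setC1 in ua.
  have ub : u != b by apply/negP => /eqP ub; move/hasPn: nm => /(_ u um'); rewrite /= ub eqxx.
  move: ast bst ab ua ub; rewrite !inE => /orP[/eqP->|/eqP->] /orP[/eqP->|/eqP->]; rewrite ?eqxx //.
    by move=> _ ua ub; rewrite ua ub.
  by move=> _ ua ub; rewrite ua ub.
have mo' : all [pred u | u \notin C] m.
  apply: (@stay_out _ e esym (minus2 s t) C u0 m) => //; first exact: clC.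
  by move: pm; rewrite rcons_path => /andP[].
apply/allP => u um'; have h1 := allP mo' u um'; have h2 := allP mm u um'; rewrite /= in h1 h2; by rewrite /= h1 h2.
Qed.

Lemma outside : ~ connected_set e (minus2 s t) -> exists o,
  [/\ path e t (rcons o s), uniq (t :: rcons o s)
    & all [pred u | (u \notin C) && (u \in minus2 s t)] o].
Proof.
move=> nc.
have [u0 [u0m u0C]] : exists u0, u0 \in minus2 s t /\ u0 \notin C.
  apply: NNPP => H; apply: nc => u w um wm.
  have inC' : forall v, v \in minus2 s t -> v \in C.
    move=> v vm; apply: NNPP => vC; apply: H; exists v; split => //; exact/negP.
  case: cc => _ sub conn _.
  have [q [pq lq aq]] := conn u w (inC' u um) (inC' w wm).
  exists q; split => //; apply/allP => v vq; have := allP aq v vq; rewrite /= => vC.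
  exact: (subsetP sub).
have sst : s \in [set s; t] by rewrite !inE eqxx.
have tst : t \in [set s; t] by rewrite !inE eqxx orbT.
have [l1 [p1 _ a1]] := hit_avoid hst u0m u0C sst tst.
have hts : t != s by rewrite eq_sym.
have [l2 [p2 _ a2]] := hit_avoid hts u0m u0C tst sst.
set W := rcons (rev l1) u0 ++ rcons l2 s.
have pW : path e t W by rewrite /W cat_path (path_revr esym p1) last_rcons p2.
have PW : forall u, u \in W -> u != s -> (u \notin C) && (u \in minus2 s t).
  move=> u; rewrite /W mem_cat !mem_rcons !in_cons mem_rev.
  case/orP => [/orP[/eqP->|ul1]|/orP[/eqP->|ul2]]; rewrite ?eqxx //.
  - by rewrite u0C u0m.
  - by move=> _; exact: (allP a1).
  - by move=> _; exact: (allP a2).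
have lW : last t W = s by rewrite /W last_cat last_rcons.
case: (shortenP pW) lW => W' pW' uW' sW.
case/lastP: W' pW' uW' sW => [|o z] pW' uW' sW /=; first by move=> ts; move: hst; rewrite ts eqxx.
rewrite last_rcons => zs; subst z.
exists o; split => //.
apply/allP => u uo; apply: PW; first by apply: sW; rewrite mem_rcons inE uo orbT.
apply/negP => /eqP us; subst u.
by move: uW'; rewrite /= mem_rcons rcons_uniq uo /= andbF.
Qed.

Hypothesis noK4 : ~ has_K4_subdivision e.
Hypothesis notr : no_transitive_edges e.
Hypothesis sep : ~ connected_set e (minus2 s t).

Lemma conn_ok x y : e x y -> x != y -> connected_set e (minus2 x y).
Proof. move=> exy xy; apply: NNPP => h; apply: (notr (u:=x) (v:=y)); split => //. Qed.

Lemma long_heavy : longest_st_path_ge e s t C 4 -> heavy e s t C.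
Proof.
case=> p [hp sp].
apply: NNPP => nh.
have light : forall v, v \in C -> e v s || e v t.
  move=> v vC; apply: NNPP => h; apply: nh; exists v => //; rewrite -negb_or; exact/negP.
have [o [po uo ao]] := outside sep.
move: hp; rewrite /st_path => -[pp lp up ap].
case/lastP: p pp lp up ap sp => [|p' z] //.
rewrite last_rcons size_rcons => pp zt up ap sp; subst z.
case: p' pp up ap sp => [|p1 [|p2 [|a al]]] pp up ap sp; try by move: sp.
set al' := a :: al.
move: pp => /= /andP[esp1 /andP[ep1p2 pal]].
have {}pal : path e p2 (rcons al' t) := pal.
set L := p1 :: p2 :: al'.
have U1 : uniq (s :: rcons L t) := up.
have A1 : all (mem V) (s :: rcons L t) := ap.
have intC : forall u, u \in L -> u \in C.
  move=> u uin.
  have uV : u \in V by apply: (allP A1); rewrite in_cons mem_rcons in_cons uin !orbT.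
  move: U1; rewrite (cons_uniq s) rcons_uniq mem_rcons in_cons negb_or.
  move=> /andP[/andP[st sn] /andP[tn _]].
  have us : u != s by apply/negP => /eqP us; rewrite -us uin in sn.
  have ut : u != t by apply/negP => /eqP ut; rewrite -ut uin in tn.
  by move: uV; rewrite /comp_vertices !inE (negbTE us) (negbTE ut) !orbF.
have BU : uniq ((s :: rcons L t) ++ o).
  rewrite cat_uniq U1 /=.
  move: uo; rewrite (cons_uniq t) rcons_uniq => /andP[_ /andP[_ ->]]; rewrite andbT.
  apply/hasPn => u uo'; have /andP[uC um] := allP ao u uo'.
  move: um; rewrite /minus2 !in_setD1 => /and3P[ut us _].
  rewrite in_cons (negbTE us) /=; apply/negP => h; have : u \in rcons L t := h.
  by rewrite mem_rcons in_cons (negbTE ut) /= => /intC uC'; rewrite uC' in uC.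
have p2C' : p2 \in L by rewrite /L !in_cons eqxx orbT.
have p2C := intC p2 p2C'.
case/orP: (light p2 p2C) => [ep2s|ep2t].
- apply: noK4; apply: (@chord _ e esym s p2 [:: p1] (al' ++ t :: o)).
  + by rewrite esym.
  + by rewrite /= esp1 ep1p2.
  + by rewrite rcons_cat rcons_cons -cat_rcons cat_path pal last_rcons po.
  + have P : perm_eq ((s :: rcons L t) ++ o) [:: s, p2 & [:: p1] ++ al' ++ t :: o].
      apply/permP => q; rewrite /L /= -cats1 !count_cat /=; exact: arithA.
    by rewrite -(perm_uniq P).
  + by [].
  + by rewrite /al'.
  + apply: conn_ok; first by rewrite esym.
    by have /andP[] := inC (intC p2 p2C'); rewrite eq_sym.
- apply: noK4; apply: (@chord _ e esym p2 t al' (o ++ [:: s; p1])) => //.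
  + by rewrite rcons_cat /= -cat_rcons cat_path po last_rcons /= esp1 ep1p2.
  + have P : perm_eq ((s :: rcons L t) ++ o) [:: p2, t & al' ++ o ++ [:: s; p1]].
      apply/permP => q; rewrite /L /= -cats1 !count_cat /=; exact: arithB.
    by rewrite -(perm_uniq P).
  + by case: o {po uo ao BU}.
  + apply: conn_ok => //.
    by have /andP[] := inC (intC p2 p2C').
Qed.

End Main.


Theorem mainTheorem7 (T : finType) (e : rel T) (s t : T) (C : {set T}) :
  simple_graph e -> series_parallel e -> no_transitive_edges e ->
  separation_pair e s t -> conn_comp e s t C ->
  (heavy e s t C <-> longest_st_path_ge e s t C 4).
Proof.
move=> [esym _] [[_ _ bic] noK4] notr [hst sep] cc; split.
- exact: (heavy_long esym hst bic cc).
- exact: (long_heavy esym hst bic cc noK4 notr sep).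
Qed.
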